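(* Let $P$, $T_\Sigma$, the lattice points $b_1,\dots,b_{p+3}$ and the coefficients $a_i(q)$ of the mirror curve be as described in the context. Suppose $b_{i_1}$ and $b_{i_2}$ are joined by an edge (1-cell) of $T_\Sigma$ and $b_{i_3}$ is a lattice point of $P$ with $2b_{i_2}=b_{i_1}+b_{i_3}$. Then $\dfrac{a_{i_1}(q)\,a_{i_3}(q)}{a_{i_2}(q)^2}$ is a non-constant monomial of $q$.
   Context: Let $P\subset\mathbb{R}^2$ be a convex lattice polygon with a unimodular triangulation $T_\Sigma$ (every triangle of $T_\Sigma$ has lattice vertices and area $1/2$, and the vertex set of $T_\Sigma$ is $P\cap\mathbb{Z}^2$); this encodes a smooth toric Calabi–Yau 3-fold whose fan has rays generated by $(m,n,1)$, $(m,n)\in P\cap\mathbb{Z}^2$, and 3-cones over the triangles of $T_\Sigma$. Write $P\cap\mathbb{Z}^2=\{b_1,\dots,b_{p+3}\}$, $b_i=(m_i,n_i)$, with $b_1=(1,0)$, $b_2=(0,1)$, $b_3=(0,0)$, where $\sigma_1=\{b_1,b_2,b_3\}$ is a triangle of $T_\Sigma$. Let $L=\ker(\mathbb{Z}^{p+3}\to\mathbb{Z}^3,\ e_i\mapsto(m_i,n_i,1))$ and let $D_i\in L^\vee=\mathrm{Hom}(L,\mathbb{Z})$ be the restriction of the $i$-th coordinate functional. For a triangle $\sigma$ of $T_\Sigma$ let $I'_\sigma$ be the set of indices of its vertices; then $\{D_j:j\notin I'_\sigma\}$ is a basis of $L^\vee\otimes\mathbb{Q}$. Fix $H_1,\dots,H_p\in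 L^\vee\otimes\mathbb{Q}$ (nef classes) such that for every triangle $\sigma$, $H_k=\sum_{j\notin I'_\sigma}s^\sigma_{k,j}D_j$ with all $s^\sigma_{k,j}\in\mathbb{Z}_{\ge0}$ and the $p\times p$ matrix $(s^\sigma_{k,j})$ nondegenerate. For $q=(q_1,\dots,q_p)\in(\mathbb{C}^* )^p$ put $a_i(q)=1$ for $i=1,2,3$ and $a_i(q)=\prod_{k=1}^p q_k^{s^{\sigma_1}_{k,i}}$ for $i\ge4$. The mirror curve is the zero set in $(\mathbb{C}^* )^2$ of $H(X,Y,q)=\sum_{i=1}^{p+3}a_i(q)X^{m_i}Y^{n_i}=1+X+Y+\sum_{i\ge4}a_i(q)X^{m_i}Y^{n_i}$. A non-constant monomial of $q$ means $\prod_k q_k^{e_k}$ with $e_k\in\mathbb{Z}_{\ge0}$ not all zero. *)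

(* Defs.v *)
From HB Require Import structures.
From mathcomp Require Import all_boot all_order all_algebra all_field.
Set Implicit Arguments. Unset Strict Implicit. Unset Printing Implicit Defensive.
Import Order.TTheory GRing.Theory Num.Theory.
Local Open Scope ring_scope.

Definition in_hull (N : nat) (b : 'I_N -> int * int) (S : {set 'I_N})
    (x : rat * rat) : Prop :=
  exists w : 'I_N -> rat,
    [/\ forall i, 0 <= w i,
        forall i, i \notin S -> w i = 0,
        \sum_i w i = 1,
        x.1 = \sum_i w i * ((b i).1)%:~R
      & x.2 = \sum_i w i * ((b i).2)%:~R].

Definition int_pt (z : int * int) : rat * rat := (z.1%:~R, z.2%:~R).

Definition det3 (N : nat) (b : 'I_N -> int * int) (i j k : 'I_N) : int :=
  ((b j).1 - (b i).1) * ((b k).2 - (b i).2)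
  - ((b j).2 - (b i).2) * ((b k).1 - (b i).1).

Definition unimodular_triangle (N : nat) (b : 'I_N -> int * int)
    (sigma : {set 'I_N}) : Prop :=
  exists i j k, sigma = [set i; j; k] /\ `|det3 b i j k| = 1.

(* {b_i} = P ∩ Z^2 for the convex lattice polygon P = conv{b_i}, listed
   without repetition *)
Definition lattice_points_of_polygon (N : nat) (b : 'I_N -> int * int) : Prop :=
  injective b /\
  (forall z : int * int, in_hull b setT (int_pt z) -> exists i, b i = z).

Definition unimodular_triangulation (N : nat) (b : 'I_N -> int * int)
    (T : {set {set 'I_N}}) : Prop :=
  [/\ forall sigma, sigma \in T -> unimodular_triangle b sigma,
      forall x, in_hull b setT x -> exists2 sigma, sigma \in T & in_hull b sigma x,
      forall sigma tau x, sigma \in T -> tau \in T ->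
         in_hull b sigma x -> in_hull b tau x -> in_hull b (sigma :&: tau) x
    & forall i, exists2 sigma, sigma \in T & i \in sigma].

(* L = ker(Z^N -> Z^3, e_i |-> (m_i, n_i, 1)) *)
Definition in_L (N : nat) (b : 'I_N -> int * int) (l : 'I_N -> int) : Prop :=
  [/\ \sum_i l i * (b i).1 = 0, \sum_i l i * (b i).2 = 0 & \sum_i l i = 0].

(* Elements of L^vee ⊗ Q are written as sum_i c_i D_i, c : 'I_N -> rat
   (D_i = restriction of the i-th coordinate functional to L).
   Two such expressions are equal iff they agree on L. *)
Definition LdualQ_eq (N : nat) (b : 'I_N -> int * int) (c d : 'I_N -> rat) : Prop :=
  forall l, in_L b l -> \sum_i c i * (l i)%:~R = \sum_i d i * (l i)%:~R.

(* the coefficients of the mirror curve, sigma_1 = {b_1,b_2,b_3} = indices 0,1,2 *)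
Definition mirror_coef (p : nat) (s1 : 'I_p -> 'I_p.+3 -> nat) (i : 'I_p.+3)
    (q : 'I_p -> algC) : algC :=
  if (i < 3)%N then 1 else \prod_(k < p) q k ^+ s1 k i.

(* Main.v *)
Require Import Defs.
From HB Require Import structures.
From mathcomp Require Import all_boot all_order all_algebra all_field.
Import Order.TTheory GRing.Theory Num.Theory.
Local Open Scope ring_scope.
From mathcomp Require Import ring lra zify.
Lemma sum_delta (R : comNzRingType) n (a : 'I_n) (f : 'I_n -> R) :
  \sum_j (j == a)%:R * f j = f a.
Proof.
rewrite (bigD1 a) //= eqxx mul1r big1 ?addr0 // => j /negbTE ->; exact: mul0r.
Qed.

Definition lvec {n} (i1 i2 i3 : 'I_n) (j : 'I_n) : int :=
  (j == i1)%:R + (j == i3)%:R - 2 * (j == i2)%:R.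

Lemma sum_lvec (R : comNzRingType) n (i1 i2 i3 : 'I_n) (f : 'I_n -> R) :
  \sum_j (lvec i1 i2 i3 j)%:~R * f j = f i1 + f i3 - 2 * f i2.
Proof.
have T : forall j, (lvec i1 i2 i3 j)%:~R * f j =
   (j == i1)%:R * f j + (j == i3)%:R * f j - 2 * ((j == i2)%:R * f j).
  move=> j; rewrite /lvec.
  case: (j == i1); case: (j == i3); case: (j == i2); rewrite /= ?mulr1n ?mulr0n;
  rewrite ?intrD ?intrN ?intrM /=; ring.
under eq_bigr => j _ do rewrite T.
rewrite sumrB big_split /= -mulr_sumr.
have E : forall a, \sum_j (j == a)%:R * f j = f a by move=> a; exact: sum_delta.
by rewrite !E.
Qed.

Lemma collinear_det n (b : 'I_n -> int * int) (i1 i2 i3 : 'I_n)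
  (hmid : (2 * (b i2).1 = (b i1).1 + (b i3).1) /\ (2 * (b i2).2 = (b i1).2 + (b i3).2))
  u v w : u \in [set i1; i2; i3] -> v \in [set i1; i2; i3] -> w \in [set i1; i2; i3] ->
  det3 b u v w = 0.
Proof.
case: hmid => h1 h2.
have e1 : (b i3).1 = 2 * (b i2).1 - (b i1).1 by rewrite h1; ring.
have e2 : (b i3).2 = 2 * (b i2).2 - (b i1).2 by rewrite h2; ring.
have H : forall x, x \in [set i1; i2; i3] -> [\/ x = i1, x = i2 | x = i3].
  by move=> x; rewrite !inE => /orP[/orP[]|] /eqP; [constructor 1|constructor 2|constructor 3].
move=> /H[]-> /H[]-> /H[]->;
  rewrite /det3 ?e1 ?e2; ring.
Qed.
Lemma rank_le_cols (F : fieldType) m n (M : 'M[F]_(m,n)) (S : {set 'I_n}) :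
  (forall j, j \in S -> forall i, M i j = 0) -> (\rank M <= #|~: S|)%N.
Proof.
move=> hS; rewrite -mxrank_tr.
have sub : (M^T <= \sum_(j in ~: S) <<row j M^T>>)%MS.
  apply/row_subP => j; case: (boolP (j \in S)) => hj.
    have -> : row j M^T = 0 by apply/rowP => i; rewrite !mxE hS.
    exact: sub0mx.
  by apply: (sumsmx_sup j); [rewrite inE | rewrite genmxE].
apply: leq_trans (mxrankS sub) _.
rewrite -sum1_card.
apply: (big_ind2 (fun (A : 'M[F]_m) (k : nat) => (\rank A <= k)%N)).
- by rewrite mxrank0.
- move=> A1 k1 A2 k2 h1 h2; apply: leq_trans (mxrank_adds_leqif _ _).1 _.
  exact: leq_add.
- by move=> j _; rewrite genmxE; exact: rank_leq_row.
Qed.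

Lemma sum_lvec' (R : comNzRingType) n (i1 i2 i3 : 'I_n) (f : 'I_n -> R) :
  \sum_j f j * (lvec i1 i2 i3 j)%:~R = f i1 + f i3 - 2 * f i2.
Proof. by rewrite -sum_lvec; apply: eq_bigr => j _; rewrite mulrC. Qed.

Lemma card3_le (T : finType) (a b c : T) : (#|[set a; b; c]| <= 3)%N.
Proof.
have -> : #|[set a; b; c]| = #|[:: a; b; c]| by apply: eq_card => x; rewrite !inE ?orbA.
exact: card_size.
Qed.

Lemma card3_eq (T : finType) (a b c : T) : a != b -> a != c -> b != c ->
  #|[set a; b; c]| = 3%N.
Proof.
move=> hab hac hbc.
have -> : #|[set a; b; c]| = #|[:: a; b; c]| by apply: eq_card => x; rewrite !inE ?orbA.
by apply/card_uniqP; rewrite /= !inE negb_or hab hac hbc.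
Qed.

Lemma sigma1_lt3 p (i : 'I_p.+3) : (i \in [set ord0; inord 1; inord 2]) = (i < 3)%N.
Proof.
rewrite !inE -!val_eqE /= !inordK //.
by case: i => [[|[|[|n]]] ?].
Qed.

Lemma natfact X p : (1 + 3 + X)%N = p.+3 -> (p <= X)%N -> False.
Proof. lia. Qed.

Theorem proposition2p5p3
  (p : nat) (b : 'I_p.+3 -> int * int) (T : {set {set 'I_p.+3}})
  (H : 'I_p -> 'I_p.+3 -> rat)
  (s : {set 'I_p.+3} -> 'I_p -> 'I_p.+3 -> nat)
  (hP : lattice_points_of_polygon b)
  (hT : unimodular_triangulation b T)
  (hb1 : b ord0 = (1, 0)) (hb2 : b (inord 1) = (0, 1)) (hb3 : b (inord 2) = (0, 0))
  (hsigma1 : [set ord0; inord 1; inord 2] \in T)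
  (hs : forall sigma, sigma \in T -> forall k : 'I_p,
          LdualQ_eq b (H k)
            (fun j => if j \in sigma then 0 else (s sigma k j)%:R))
  (hnd : forall sigma, sigma \in T ->
          \rank (\matrix_(k < p, j < p.+3)
                   (if j \in sigma then 0 else (s sigma k j)%:R : rat)) = p)
  (i1 i2 i3 : 'I_p.+3)
  (hedge : exists2 sigma, sigma \in T & [/\ i1 != i2, i1 \in sigma & i2 \in sigma])
  (hmid : (2 * (b i2).1 = (b i1).1 + (b i3).1) /\ (2 * (b i2).2 = (b i1).2 + (b i3).2)) :
  exists e : 'I_p -> nat,
    (exists k, e k != 0%N) /\
    forall q : 'I_p -> algC, (forall k, q k != 0) ->
      mirror_coef (s [set ord0; inord 1; inord 2]) i1 q
        * mirror_coef (s [set ord0; inord 1; inord 2]) i3 q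
        / (mirror_coef (s [set ord0; inord 1; inord 2]) i2 q) ^+ 2
      = \prod_(k < p) q k ^+ e k.
Proof.
set S1 := [set ord0; inord 1; inord 2].
case: hedge => sig hsT [hne h1s h2s].
case: hP => binj _.
case: hT => hTu _ _ _.
have hmid' := hmid.
case: hmid => hm1 hm2.
have h32 : i3 != i2.
  apply/eqP => E; subst i3; move/eqP: hne; apply; apply: binj.
  move: hm1 hm2; case: (b i1) => [x1 y1]; case: (b i2) => [x2 y2] /= h1 h2.
  congr pair; lia.
have h31 : i3 != i1.
  apply/eqP => E; subst i3; move/eqP: hne; apply; apply: binj.
  move: hm1 hm2; case: (b i1) => [x1 y1]; case: (b i2) => [x2 y2] /= h1 h2.
  congr pair; lia.
case: (hTu _ hsT) => a [b' [c [hsig hdet]]].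
have hd0 : forall u v w, u = v \/ u = w \/ v = w -> det3 b u v w = 0.
  move=> u v w [->|[->|->]]; rewrite /det3; ring.
have hab : a != b' by apply/eqP => E; move: hdet; rewrite hd0 ?normr0 //; tauto.
have hac : a != c by apply/eqP => E; move: hdet; rewrite hd0 ?normr0 //; tauto.
have hbc : b' != c by apply/eqP => E; move: hdet; rewrite hd0 ?normr0 //; tauto.
have hcard : #|sig| = 3%N by rewrite hsig card3_eq.
have h3s : i3 \notin sig.
  apply/negP => h3s.
  have E : [set i1; i2; i3] == sig.
    rewrite eqEcard hcard card3_eq // 1?eq_sym // andbT.
    by apply/subsetP => x; rewrite !inE => /orP[/orP[]|] /eqP ->.
  move/eqP: E hdet => E.
  have hin : forall x, x \in sig -> x \in [set i1; i2; i3] by move=> x; rewrite E.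
  rewrite (@collinear_det _ b i1 i2 i3 hmid') ?normr0 ?hin ?hsig ?inE ?eqxx ?orbT //.
have hrank := hnd _ hsT.
exists (fun k => s sig k i3); split.
  case: (pickP (fun k => s sig k i3 != 0%N)) => [k hk|h0]; first by exists k.
  exfalso.
  have := @rank_le_cols _ _ _
    (\matrix_(k, j) (if j \in sig then 0 else (s sig k j)%:R : rat)) (i3 |: sig).
  rewrite hrank.
  have hc := cardsC (i3 |: sig); rewrite card_ord cardsU1 h3s hcard /= in hc.
  have H0 : forall j, j \in i3 |: sig -> forall k : 'I_p,
      (\matrix_(k, j) (if j \in sig then 0 else (s sig k j)%:R : rat)) k j = 0.
    move=> j hj k; rewrite mxE; case/setU1P: hj => [->|->] //.
    by rewrite (negbTE h3s); move: (h0 k) => /negbFE/eqP ->.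
  move/(_ H0) => hle.
  exact: natfact hc hle.
pose t k j := if j \in S1 then 0%N else s S1 k j.
have hmc : forall j q, mirror_coef (s S1) j q = \prod_k q k ^+ t k j.
  move=> j q; rewrite /mirror_coef /t (_ : (j \in S1) = (j < 3)%N); last exact: sigma1_lt3.
  case: ifP => h; last by [].
  by rewrite big1 // => k _; rewrite expr0.
have L : in_L b (lvec i1 i2 i3).
  split.
  - transitivity (\sum_i (lvec i1 i2 i3 i)%:~R * (b i).1).
      by apply: eq_bigr => i _; rewrite intz.
    by rewrite sum_lvec hm1 subrr.
  - transitivity (\sum_i (lvec i1 i2 i3 i)%:~R * (b i).2).
      by apply: eq_bigr => i _; rewrite intz.
    by rewrite sum_lvec hm2 subrr.
  - transitivity (\sum_i (lvec i1 i2 i3 i)%:~R * (1 : int)).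
      by apply: eq_bigr => i _; rewrite intz mulr1.
    by rewrite sum_lvec !mulr1.
have key : forall k, (t k i1 + t k i3)%N = (s sig k i3 + 2 * t k i2)%N.
  move=> k.
  have E1 := hs _ hsigma1 k _ L; have E2 := hs _ hsT k _ L.
  rewrite E1 !sum_lvec' h1s h2s (negbTE h3s) in E2.
  have ct : forall j, (if j \in S1 then 0 else (s S1 k j)%:R : rat) = (t k j)%:R.
    by move=> j; rewrite /t; case: ifP.
  rewrite !ct in E2.
  apply/eqP; rewrite -(eqr_nat rat) !natrD. apply/eqP.
  lra.
move=> q hq; rewrite !hmc.
have X0 : \prod_k q k ^+ t k i2 != 0.
  by apply/prodf_neq0 => k _; rewrite expf_neq0.
have num : (\prod_k q k ^+ t k i1) * (\prod_k q k ^+ t k i3)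
    = (\prod_k q k ^+ s sig k i3) * (\prod_k q k ^+ t k i2) ^+ 2.
  rewrite -big_split -prodrXl -big_split /=; apply: eq_bigr => k _.
  by rewrite -exprD key exprD (mulnC 2) exprM.
by rewrite num mulfK // expf_neq0.
Qed.
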